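(* In the setting below, let $p\neq0$, $a_0,a_2,a_3$ be real constants with $a_2\neq0$, suppose $M$ has constant sectional curvature $K=\dfrac{a_0}{a_2s^2}$, and put $\tilde\theta=-2p\theta$, $\omega_1=a_0\alpha_0+a_2\alpha_2+a_3\,d\theta$ (so $d\omega_1=0$). A natural SU(2)-structure $(\tilde\theta,\omega_1,\omega_2,\omega_3)$ on $\mathcal S$ with these $\tilde\theta,\omega_1$ is double-hypo if and only if there are real constants $b_0,b_1,b_2$ with $$\omega_2=b_0\alpha_0+b_1\alpha_1+b_2\alpha_2,\qquad \omega_3=\frac{Kb_1}{3p}\alpha_0+\frac{s^2Kb_2-b_0}{6s^2p}\alpha_1-\frac{b_1}{3s^2p}\alpha_2,$$ satisfying $$a_3^2-a_0a_2=a_3p,\quad b_1^2-b_0b_2=a_3p,\quad a_0b_2+a_2b_0=0,\quad b_0^2-2s^2Kb_0b_2+s^4K^2b_2^2+4s^2Kb_1^2=36s^4a_3p^3,$$ together with $a_0a_2>0$ and $a_3p>0$. Moreover, in this case $M$ has positive constant sectional curvature $K=9s^2p^2$.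
   Context: Let $(M,g)$ be a connected oriented Riemannian 3-manifold, $s>0$, and $\mathcal S=\{u\in TM:\|u\|=s\}$ the total space of the radius-$s$ tangent sphere bundle with the canonical (Sasaki-induced) metric. An adapted frame at $u\in\mathcal S$: take a positively oriented orthonormal frame $(f_0=u/s,f_1,f_2)$ of $T_{\pi(u)}M$ and set $e_0=f_0^h,e_1=f_1^h,e_2=f_2^h,e_3=f_1^v,e_4=f_2^v$ (horizontal and vertical lifts); dual coframe $e^0,\dots,e^4$, $e^{ij}=e^i\wedge e^j$. Globally defined forms: $\theta=s\,e^0$, $\alpha_0=e^{12}$, $\alpha_1=e^{14}-e^{23}$, $\alpha_2=e^{34}$, $d\theta=e^{31}+e^{42}$; $\alpha_i\wedge d\theta=0$, $\alpha_0\wedge\alpha_1=\alpha_2\wedge\alpha_1=0$, $\alpha_0\wedge\alpha_2=-\frac12\alpha_1\wedge\alpha_1=-\frac12 d\theta\wedge d\theta=e^{1234}$. For constant sectional curvature $K$: $d\alpha_0=s^{-2}\theta\wedge\alpha_1$, $d\alpha_1=2s^{-2}\theta\wedge\alpha_2-2K\theta\wedge\alpha_0$, $d\alpha_2=-K\theta\wedge\alpha_1$. An SU(2)-structure: $(\tilde\theta,\omega_1,\omega_2,\omega_3)$ with (C1) $\tilde\theta\wedge\omega_1\wedge\omega_1\neq0$, $\omega_i\wedge\omega_j=0$ ($i\ne j$), $\omega_1\wedge\omega_1=\omega_2\wedge\omega_2=\omega_3\wedge\omega_3=2v$, $v$ nowhere zero; (C2) $x\lrcorner\omega_1=y\lrcorner\omega_2\Rightarrow\omega_3(x,y)\ge0$.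 Hypo: $d\omega_1=0$, $d(\tilde\theta\wedge\omega_2)=d(\tilde\theta\wedge\omega_3)=0$. Nearly-hypo: $d\omega_2=3\tilde\theta\wedge\omega_3$, $d(\tilde\theta\wedge\omega_1)=-2\omega_1\wedge\omega_1$. Double-hypo: both hypo and nearly-hypo. Natural SU(2)-structure on $\mathcal S$: $\tilde\theta=-2p\theta$ ($p\ne0$ constant), each $\omega_i$ a constant-coefficient combination of $\alpha_0,\alpha_1,\alpha_2,d\theta$. *)

(* Defs.v *)
(* real numbers from Stdlib Reals.
   Pointwise model of constant-coefficient forms on the tangent sphere bundle
   in an adapted coframe e^0,...,e^4. *)
From Stdlib Require Import Reals List Arith.
Import ListNotations.
Open Scope R_scope.

(** A form on R^5: coefficient of e^{i1...ik}, read on strictly increasing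
    index lists [i1;...;ik] with entries in {0,...,4}. *)
Definition form := list nat -> R.

Definition fzero : form := fun _ => 0.
Definition fadd (a b : form) : form := fun L => a L + b L.
Definition fscale (c : R) (a : form) : form := fun L => c * a L.

Definition e (i : nat) : form :=
  fun L => if list_eq_dec Nat.eq_dec L [i] then 1 else 0.

Fixpoint splits (L : list nat) : list (list nat * list nat) :=
  match L with
  | [] => [([], [])]
  | x :: t =>
      map (fun pr => (x :: fst pr, snd pr)) (splits t) ++
      map (fun pr => (fst pr, x :: snd pr)) (splits t)
  end.

Fixpoint inv (I J : list nat) : nat :=
  match I with
  | [] => 0
  | i :: t => (length (filter (fun j => Nat.ltb j i) J) + inv t J)%nat
  end.

Definition Rsum (l : list R) : R := fold_right Rplus 0 l.

Definition wedge (a b : form) : form :=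
  fun L => Rsum (map (fun pr => (-1) ^ (inv (fst pr) (snd pr))
                                * a (fst pr) * b (snd pr)) (splits L)).

Definition idx5 : list nat := [0; 1; 2; 3; 4]%nat.
(** all increasing index lists (basis of the exterior algebra of R^5) *)
Definition basis_lists : list (list nat) := map fst (splits idx5).

Definition feq (a b : form) : Prop := forall L, In L basis_lists -> a L = b L.
Definition fnonzero (a : form) : Prop := exists L, In L basis_lists /\ a L <> 0.

Definition comp2 (w : form) (i j : nat) : R :=
  if Nat.ltb i j then w [i; j] else if Nat.ltb j i then - w [j; i] else 0.
Definition eval2 (w : form) (x y : nat -> R) : R :=
  Rsum (map (fun i => Rsum (map (fun j => comp2 w i j * x i * y j) idx5)) idx5).

Definition theta (s : R) : form := fscale s (e 0).
Definition alpha0 : form := wedge (e 1) (e 2).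
Definition alpha1 : form := fadd (wedge (e 1) (e 4)) (fscale (-1) (wedge (e 2) (e 3))).
Definition alpha2 : form := wedge (e 3) (e 4).
Definition dtheta : form := fadd (wedge (e 3) (e 1)) (wedge (e 4) (e 2)).

Record NF := mkNF { n0 : R; n1 : R; n2 : R; n3 : R }.
Definition nf (w : NF) : form :=
  fadd (fscale (n0 w) alpha0) (fadd (fscale (n1 w) alpha1)
    (fadd (fscale (n2 w) alpha2) (fscale (n3 w) dtheta))).

(** exterior derivatives for constant sectional curvature K *)
Definition d_alpha0 (s : R) : form := fscale (/ s ^ 2) (wedge (theta s) alpha1).
Definition d_alpha1 (s K : R) : form :=
  fadd (fscale (2 / s ^ 2) (wedge (theta s) alpha2))
       (fscale (-2 * K) (wedge (theta s) alpha0)).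
Definition d_alpha2 (s K : R) : form := fscale (- K) (wedge (theta s) alpha1).
(** d of a natural 2-form (d(dtheta) = 0) *)
Definition d_nf (s K : R) (w : NF) : form :=
  fadd (fscale (n0 w) (d_alpha0 s)) (fadd (fscale (n1 w) (d_alpha1 s K))
    (fadd (fscale (n2 w) (d_alpha2 s K)) fzero)).

Definition ttheta (s p : R) : form := fscale (-2 * p) (theta s).
(** d(ttheta /\ w) = d(ttheta) /\ w - ttheta /\ dw, with d(ttheta) = -2p dtheta *)
Definition d_ttheta_wedge (s K p : R) (w : NF) : form :=
  fadd (wedge (fscale (-2 * p) dtheta) (nf w))
       (fscale (-1) (wedge (ttheta s p) (d_nf s K w))).

Definition SU2 (th o1 o2 o3 : form) : Prop :=
  (fnonzero (wedge th (wedge o1 o1)) /\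
   feq (wedge o1 o2) fzero /\ feq (wedge o1 o3) fzero /\ feq (wedge o2 o3) fzero /\
   exists v, fnonzero v /\ feq (wedge o1 o1) (fscale 2 v) /\
             feq (wedge o2 o2) (fscale 2 v) /\ feq (wedge o3 o3) (fscale 2 v)) /\
  (forall x y : nat -> R,
      (forall z : nat -> R, eval2 o1 x z = eval2 o2 y z) -> eval2 o3 x y >= 0).

Definition natural_SU2 (s p : R) (w1 w2 w3 : NF) : Prop :=
  SU2 (ttheta s p) (nf w1) (nf w2) (nf w3).

Definition hypo (s K p : R) (w1 w2 w3 : NF) : Prop :=
  feq (d_nf s K w1) fzero /\
  feq (d_ttheta_wedge s K p w2) fzero /\ feq (d_ttheta_wedge s K p w3) fzero.

Definition nearly_hypo (s K p : R) (w1 w2 w3 : NF) : Prop :=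
  feq (d_nf s K w2) (fscale 3 (wedge (ttheta s p) (nf w3))) /\
  feq (d_ttheta_wedge s K p w1) (fscale (-2) (wedge (nf w1) (nf w1))).

Definition double_hypo (s K p : R) (w1 w2 w3 : NF) : Prop :=
  hypo s K p w1 w2 w3 /\ nearly_hypo s K p w1 w2 w3.

(* Main.v *)
Require Import Defs.
From Stdlib Require Import Reals List.
From Stdlib Require Import Lra Psatz.
Import ListNotations.
Open Scope R_scope.
Definition val2 (c0 c1 c2 c3 : R) (L : list nat) : R :=
  match L with
  | [1;2]%nat => c0 | [1;4]%nat => c1 | [2;3]%nat => - c1 | [3;4]%nat => c2
  | [1;3]%nat => - c3 | [2;4]%nat => - c3 | _ => 0 end.
Definition e0v (L : list nat) : R := match L with [0]%nat => 1 | _ => 0 end.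
Definition val4 (x : R) (L : list nat) : R := match L with [1;2;3;4]%nat => x | _ => 0 end.
Definition val5 (x : R) (L : list nat) : R := match L with [0;1;2;3;4]%nat => x | _ => 0 end.
Definition vald (s c0 c1 c2 c3 : R) (L : list nat) : R :=
  match L with
  | [0;1;2]%nat => s*c0 | [0;1;4]%nat => s*c1 | [0;2;3]%nat => -(s*c1) | [0;3;4]%nat => s*c2
  | [0;1;3]%nat => -(s*c3) | [0;2;4]%nat => -(s*c3) | _ => 0 end.
Definition Q (a b : NF) : R := n0 a * n2 b + n2 a * n0 b - 2*n1 a*n1 b - 2*n3 a * n3 b.

Ltac inb H := cbn [basis_lists splits idx5 map app fst] in H;
  repeat (destruct H as [<- | H]); [..|destruct H].
Lemma nf_val w L : In L basis_lists -> nf w L = val2 (n0 w) (n1 w) (n2 w) (n3 w) L.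
Proof. intro H. unfold nf, alpha0, alpha1, alpha2, dtheta. unfold fadd, fscale.
inb H; unfold wedge, e; cbn; ring. Qed.
Lemma e0_val L : e 0 L = e0v L.
Proof. unfold e. destruct (list_eq_dec _ _ _) as [->|n]; [reflexivity|].
destruct L as [|[|x] [|y t]]; try reflexivity; now elim n. Qed.
Lemma a0_val L : In L basis_lists -> alpha0 L = val2 1 0 0 0 L.
Proof. intro H. rewrite <- (nf_val (mkNF 1 0 0 0)) by exact H. unfold nf, fadd, fscale; cbn. ring. Qed.
Lemma a1_val L : In L basis_lists -> alpha1 L = val2 0 1 0 0 L.
Proof. intro H. rewrite <- (nf_val (mkNF 0 1 0 0)) by exact H. unfold nf, fadd, fscale; cbn. ring. Qed.
Lemma a2_val L : In L basis_lists -> alpha2 L = val2 0 0 1 0 L.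
Proof. intro H. rewrite <- (nf_val (mkNF 0 0 1 0)) by exact H. unfold nf, fadd, fscale; cbn. ring. Qed.
Lemma dt_val L : In L basis_lists -> dtheta L = val2 0 0 0 1 L.
Proof. intro H. rewrite <- (nf_val (mkNF 0 0 0 1)) by exact H. unfold nf, fadd, fscale; cbn. ring. Qed.

Lemma bl_eq : basis_lists = [[0;1;2;3;4];[0;1;2;3];[0;1;2;4];[0;1;2];[0;1;3;4];[0;1;3];[0;1;4];[0;1];[0;2;3;4];[0;2;3];[0;2;4];[0;2];[0;3;4];[0;3];[0;4];[0];[1;2;3;4];[1;2;3];[1;2;4];[1;2];[1;3;4];[1;3];[1;4];[1];[2;3;4];[2;3];[2;4];[2];[3;4];[3];[4];[]]%nat.
Proof. reflexivity. Qed.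
Ltac sd := rewrite bl_eq; repeat (first [left; reflexivity | right]).
Ltac ex1 := unfold wedge; cbn [splits map app fst snd inv length filter Nat.ltb Nat.leb Rsum fold_right pow].
Ltac rw H := repeat (rewrite H; [|sd]).

Lemma G3 X Y x0 x1 x2 x3 y0 y1 y2 y3 L :
  (forall L, In L basis_lists -> X L = val2 x0 x1 x2 x3 L) ->
  (forall L, In L basis_lists -> Y L = val2 y0 y1 y2 y3 L) ->
  In L basis_lists ->
  wedge X Y L = val4 (x0*y2 + x2*y0 - 2*x1*y1 - 2*x3*y3) L.
Proof. intros HX HY H. inb H; ex1; rw HX; rw HY; cbn; ring. Qed.
Lemma G1 s p X q L :
  (forall L, In L basis_lists -> X L = val4 q L) -> In L basis_lists ->
  wedge (ttheta s p) X L = val5 (-2*p*s*q) L.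
Proof. intros HX H. unfold ttheta, theta, fscale. inb H; ex1; rewrite ?e0_val; rw HX; cbn; ring. Qed.
Lemma G2 s X c0 c1 c2 c3 L :
  (forall L, In L basis_lists -> X L = val2 c0 c1 c2 c3 L) -> In L basis_lists ->
  wedge (theta s) X L = vald s c0 c1 c2 c3 L.
Proof. intros HX H. unfold theta, fscale. inb H; ex1; rewrite ?e0_val; rw HX; cbn; ring. Qed.
Lemma G4 s s' X c0 c1 c2 c3 L :
  (forall L, In L basis_lists -> X L = vald s' c0 c1 c2 c3 L) -> In L basis_lists ->
  wedge (theta s) X L = 0.
Proof. intros HX H. unfold theta, fscale. inb H; ex1; rewrite ?e0_val; rw HX; cbn; ring. Qed.

Lemma Rsum_scale c (l : list R) : Rsum (map (fun x => c * x) l) = c * Rsum l.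
Proof. unfold Rsum. induction l; simpl; [ring| rewrite IHl; ring]. Qed.
Lemma wedge_scale_l k a b L : wedge (fscale k a) b L = k * wedge a b L.
Proof. unfold wedge, fscale, Rsum. induction (splits L); simpl; [ring|]. rewrite IHl. ring. Qed.

Lemma wedge_nf a b L : In L basis_lists -> wedge (nf a) (nf b) L = val4 (Q a b) L.
Proof. intro H. apply G3; auto; intros; apply nf_val; auto. Qed.
Lemma wedge_t3 s p a L : In L basis_lists ->
  wedge (ttheta s p) (wedge (nf a) (nf a)) L = val5 (-2*p*s*Q a a) L.
Proof. intro H. apply G1; auto. intros; apply wedge_nf; auto. Qed.
Lemma wedge_tt s p a L : In L basis_lists ->
  wedge (ttheta s p) (nf a) L = -2*p * vald s (n0 a) (n1 a) (n2 a) (n3 a) L.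
Proof. intro H. unfold ttheta. rewrite wedge_scale_l. f_equal. apply G2; auto.
  intros; apply nf_val; auto. Qed.
Lemma dnf_val s K w L : s <> 0 -> In L basis_lists ->
  d_nf s K w L = vald s (-2*K*n1 w) (n0 w/s^2 - K*n2 w) (2*n1 w/s^2) 0 L.
Proof. intros Hs H. unfold d_nf, d_alpha0, d_alpha1, d_alpha2, fadd, fscale, fzero.
  rewrite !(G2 s alpha0 1 0 0 0), !(G2 s alpha1 0 1 0 0), !(G2 s alpha2 0 0 1 0); auto;
  try (intros; first [apply a0_val|apply a1_val|apply a2_val]; auto).
  inb H; cbn; field; auto. Qed.
Lemma dtw_val s K p w L : s <> 0 -> In L basis_lists ->
  d_ttheta_wedge s K p w L = val4 (4*p*n3 w) L.
Proof. intros Hs H. unfold d_ttheta_wedge, fadd. rewrite wedge_scale_l.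
  rewrite (G3 dtheta (nf w) 0 0 0 1 (n0 w) (n1 w) (n2 w) (n3 w)); auto;
  try (intros; first [apply dt_val|apply nf_val]; auto).
  unfold fscale. unfold ttheta at 1. rewrite wedge_scale_l.
  rewrite (G4 s s (d_nf s K w) (-2*K*n1 w) (n0 w/s^2 - K*n2 w) (2*n1 w/s^2) 0); auto.
  2:{ intros; apply dnf_val; auto. }
  inb H; cbn; ring. Qed.

Lemma cancel k x : k <> 0 -> k * x = 0 -> x = 0.
Proof. intros Hk H. apply Rmult_integral in H. destruct H; [contradiction|assumption]. Qed.

Lemma sq_pos x : x <> 0 -> 0 < x^2.
Proof. intro H. replace (x^2) with (Rsqr x) by (unfold Rsqr; ring). apply Rlt_0_sqr; auto. Qed.

Ltac pt H L H' := pose proof (H L ltac:(sd)) as H'.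
Ltac sd2 := first [assumption | sd].
Ltac cl H := unfold Q, fzero, fscale in H; cbn [val2 val4 val5 vald n0 n1 n2 n3] in H.

Theorem mainTheorem10 (s p a0 a2 a3 K : R) (w2 w3 : NF)
  (hs : 0 < s) (hp : p <> 0) (ha2 : a2 <> 0)
  (hK : K = a0 / (a2 * s ^ 2))
  (hSU2 : natural_SU2 s p (mkNF a0 0 a2 a3) w2 w3) :
  (double_hypo s K p (mkNF a0 0 a2 a3) w2 w3 <->
   exists b0 b1 b2 : R,
     feq (nf w2) (nf (mkNF b0 b1 b2 0)) /\
     feq (nf w3) (nf (mkNF (K * b1 / (3 * p))
                           ((s ^ 2 * K * b2 - b0) / (6 * s ^ 2 * p))
                           (- b1 / (3 * s ^ 2 * p)) 0)) /\
     a3 ^ 2 - a0 * a2 = a3 * p /\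
     b1 ^ 2 - b0 * b2 = a3 * p /\
     a0 * b2 + a2 * b0 = 0 /\
     b0 ^ 2 - 2 * s ^ 2 * K * b0 * b2 + s ^ 4 * K ^ 2 * b2 ^ 2 + 4 * s ^ 2 * K * b1 ^ 2
       = 36 * s ^ 4 * a3 * p ^ 3 /\
     a0 * a2 > 0 /\ a3 * p > 0) /\
  (double_hypo s K p (mkNF a0 0 a2 a3) w2 w3 -> 0 < K /\ K = 9 * s ^ 2 * p ^ 2).
Proof.
  assert (Hs0 : s <> 0) by lra.
  destruct w2 as [c0 c1 c2 c3], w3 as [d0 d1 d2 d3].
  destruct hSU2 as [[Hnz [H12 [H13 [H23 [v [_ [H11v [H22v H33v]]]]]]]] _].
  assert (F1 : a0*a2 - a3^2 <> 0).
  { destruct Hnz as [L [HL HN]]. rewrite wedge_t3 in HN by exact HL.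
    unfold Q in HN; cbn [n0 n1 n2 n3] in HN. intro E. apply HN.
    replace (-2*p*s*(a0*a2 + a2*a0 - 2*0*0 - 2*a3*a3)) with (-4*p*s*(a0*a2-a3^2)) by ring.
    rewrite E, Rmult_0_r. inb HL; reflexivity. }
  pt H12 ([1;2;3;4]%nat) E12. rewrite wedge_nf in E12 by sd2. cl E12.
  pt H11v ([1;2;3;4]%nat) E11. rewrite wedge_nf in E11 by sd2. cl E11.
  pt H22v ([1;2;3;4]%nat) E22. rewrite wedge_nf in E22 by sd2. cl E22.
  pt H33v ([1;2;3;4]%nat) E33. rewrite wedge_nf in E33 by sd2. cl E33.
  assert (Ha0 : a0 = K*a2*s^2) by (rewrite hK; field; auto).
  assert (FWD : double_hypo s K p (mkNF a0 0 a2 a3) (mkNF c0 c1 c2 c3) (mkNF d0 d1 d2 d3) ->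
     c3 = 0 /\ d3 = 0 /\ d0 = K*c1/(3*p) /\ d1 = (s^2*K*c2 - c0)/(6*s^2*p) /\
     d2 = - c1/(3*s^2*p) /\ a3^2 - a0*a2 = a3*p /\ c1^2 - c0*c2 = a3*p /\
     a0*c2 + a2*c0 = 0 /\
     c0^2 - 2*s^2*K*c0*c2 + s^4*K^2*c2^2 + 4*s^2*K*c1^2 = 36*s^4*a3*p^3 /\
     0 < K /\ K = 9*s^2*p^2 /\ a0*a2 > 0 /\ a3*p > 0).
  { intros [[Hd1 [Hh2 Hh3]] [Hn1 Hn2]].
    pt Hh2 ([1;2;3;4]%nat) Gh2. rewrite dtw_val in Gh2 by sd2. cl Gh2.
    assert (Hc3 : c3 = 0) by (apply (cancel (4*p)); [lra|lra]).
    pt Hn2 ([1;2;3;4]%nat) Nn2. rewrite dtw_val in Nn2 by sd2. unfold fscale in Nn2. rewrite wedge_nf in Nn2 by sd2. cl Nn2.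
    assert (HN : a3^2 - a0*a2 = a3*p) by nra.
    pt Hn1 ([0;1;2]%nat) N012. rewrite dnf_val in N012 by sd2. unfold fscale in N012. rewrite wedge_tt in N012 by sd2. cl N012.
    pt Hn1 ([0;1;4]%nat) N014. rewrite dnf_val in N014 by sd2. unfold fscale in N014. rewrite wedge_tt in N014 by sd2. cl N014.
    pt Hn1 ([0;3;4]%nat) N034. rewrite dnf_val in N034 by sd2. unfold fscale in N034. rewrite wedge_tt in N034 by sd2. cl N034.
    pt Hn1 ([0;1;3]%nat) N013. rewrite dnf_val in N013 by sd2. unfold fscale in N013. rewrite wedge_tt in N013 by sd2. cl N013.
    assert (nz : -6*p*s <> 0) by (apply Rmult_integral_contrapositive; split; lra).
    assert (Hd0 : d0 = K*c1/(3*p)).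
    { apply (Rmult_eq_reg_l (-6*p*s)); auto. replace (-6*p*s*(K*c1/(3*p))) with (s*(-2*K*c1)) by (field; auto). rewrite N012. ring. }
    assert (Hd1' : d1 = (s^2*K*c2 - c0)/(6*s^2*p)).
    { apply (Rmult_eq_reg_l (-6*p*s)); auto. replace (-6*p*s*((s^2*K*c2 - c0)/(6*s^2*p))) with (s*(c0/s^2 - K*c2)) by (field; auto). rewrite N014. ring. }
    assert (Hd2 : d2 = -c1/(3*s^2*p)).
    { apply (Rmult_eq_reg_l (-6*p*s)); auto. replace (-6*p*s*(-c1/(3*s^2*p))) with (s*(2*c1/s^2)) by (field; auto). rewrite N034. ring. }
    assert (Hd3 : d3 = 0).
    { apply (cancel (-6*p*s)); auto. lra. }
    subst c3 d3.
    assert (HX : c1^2 - c0*c2 = a3*p) by nra.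
    assert (Hd : d1^2 - d0*d2 = a3*p) by nra.
    assert (I : 36*s^4*p^2*(d1^2 - d0*d2) = (s^2*K*c2 - c0)^2 + 4*s^2*K*c1^2)
      by (rewrite Hd0, Hd1', Hd2; field; auto).
    assert (Hc0 : c0 = -(K*s^2*c2)).
    { assert (a2 * (c0 + K*s^2*c2) = 0) by (rewrite Ha0 in E12; lra). apply cancel in H; auto. lra. }
    assert (Hap : a3*p <> 0) by (intro E; apply F1; lra).
    assert (HK9 : K = 9*s^2*p^2).
    { assert (Z : 4*s^2*(a3*p)*(K - 9*s^2*p^2) = 0).
      { replace (4*s^2*(a3*p)*(K - 9*s^2*p^2)) with (4*s^2*K*(c1^2-c0*c2) - 36*s^4*p^2*(d1^2-d0*d2)) by (rewrite HX, Hd; ring).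
        rewrite I, Hc0; ring. }
      apply cancel in Z. lra. apply Rmult_integral_contrapositive; split; auto.
      apply Rmult_integral_contrapositive; split; [lra| apply pow_nonzero; auto]. }
    assert (Hs2 : 0 < s^2) by (apply sq_pos; auto).
    assert (Hp2 : 0 < p^2) by (apply sq_pos; auto).
    assert (HKp : 0 < K) by (rewrite HK9; apply Rmult_lt_0_compat; lra).
    repeat split; auto; try nra.
    - replace (c0^2 - 2*s^2*K*c0*c2 + s^4*K^2*c2^2 + 4*s^2*K*c1^2) with ((s^2*K*c2 - c0)^2 + 4*s^2*K*c1^2) by ring.
      rewrite <- I, Hd. ring.
    - rewrite Ha0. assert (0 < a2^2) by (apply sq_pos; auto). assert (0 < s^2) by (apply sq_pos; auto).
      replace (K*a2*s^2*a2) with (K*(a2^2*s^2)) by ring.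
      apply Rlt_gt, Rmult_lt_0_compat; auto; apply Rmult_lt_0_compat; auto. }
  split; [split|].
  - intro DH. destruct (FWD DH) as (Hc3 & Hd3 & Hd0 & Hd1 & Hd2 & R1 & R2 & R3 & R4 & _ & _ & R5 & R6).
    exists c0, c1, c2. subst c3 d3 d0 d1 d2. repeat split; auto; intros L _; reflexivity.
  - intros (b0 & b1 & b2 & Hw2 & Hw3 & R1 & R2 & R3 & R4 & R5 & R6).
    pt Hw2 ([1;2]%nat) Bb0. pt Hw2 ([1;4]%nat) Bb1. pt Hw2 ([3;4]%nat) Bb2. pt Hw2 ([1;3]%nat) Bb3.
    rewrite !nf_val in Bb0, Bb1, Bb2, Bb3 by sd2. cl Bb0. cl Bb1. cl Bb2. cl Bb3.
    pt Hw3 ([1;2]%nat) Dd0. pt Hw3 ([1;4]%nat) Dd1. pt Hw3 ([3;4]%nat) Dd2. pt Hw3 ([1;3]%nat) Dd3.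
    rewrite !nf_val in Dd0, Dd1, Dd2, Dd3 by sd2. cl Dd0. cl Dd1. cl Dd2. cl Dd3.
    assert (c3 = 0) by lra. assert (d3 = 0) by lra. subst c0 c1 c2 c3 d0 d1 d2 d3.
    split; [split; [|split]|split].
    + intros L HL. rewrite dnf_val by auto. unfold fzero; cbn [n0 n1 n2 n3].
      replace (a0/s^2 - K*a2) with 0 by (rewrite hK; field; auto).
      inb HL; cbn; first [ring | field; auto].
    + intros L HL. rewrite dtw_val by auto. unfold fzero; cbn [n3]. inb HL; cbn; first [ring | field; auto].
    + intros L HL. rewrite dtw_val by auto. unfold fzero; cbn [n3]. inb HL; cbn; first [ring | field; auto].
    + intros L HL. rewrite dnf_val by auto. unfold fscale. rewrite wedge_tt by auto. cbn [n0 n1 n2 n3].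
      inb HL; cbn; field; auto.
    + intros L HL. rewrite dtw_val by auto. unfold fscale. rewrite wedge_nf by auto. unfold Q; cbn [n0 n1 n2 n3].
      inb HL; cbn; nra.
  - intro DH. destruct (FWD DH) as (_ & _ & _ & _ & _ & _ & _ & _ & _ & HKp & HK9 & _). auto.
Qed.
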